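(* Let $q$ be a prime power, $m>4$, $V=\mathbb F_q^m$, and $\mu=m-1$. Every $(\mu+1)$-dimensional subspace of $\bigwedge^2V$ contains at most $(q^{\mu}-1)+q^2(q-1)$ decomposable vectors.
   Context: A nonzero $\omega\in\bigwedge^2V$ is decomposable if $\omega=u\wedge v$ for some $u,v\in V$. *)

(* Defs.v *)
From HB Require Import structures.
From mathcomp Require Import all_boot all_order all_algebra all_field.
Set Implicit Arguments. Unset Strict Implicit. Unset Printing Implicit Defensive.
Import GRing.Theory.
Local Open Scope ring_scope.

(* Model of the exterior square  /\^2 V  for V = F^m (vectors = row vectors
   'rV[F]_m): the space of alternating m x m matrices (zero diagonal,
   A^T = -A), with  u /\ v  :=  u^T v - v^T u  (entry (i,j) = u_i v_j - u_j v_i,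
   the Plücker coordinates of u /\ v). *)
Definition wedge (F : fieldType) (m : nat) (u v : 'rV[F]_m) : 'M[F]_m :=
  u^T *m v - v^T *m u.

Definition alternating (F : fieldType) (m : nat) (A : 'M[F]_m) : bool :=
  [forall i, A i i == 0] && (A^T == - A).

Definition decomposable (F : finFieldType) (m : nat) (A : 'M[F]_m) : bool :=
  (A != 0) && [exists u : 'rV[F]_m, exists v : 'rV[F]_m, A == wedge u v].

(* Main.v *)
Require Import Defs.
From HB Require Import structures.
From mathcomp Require Import all_boot all_order all_algebra all_field.
From mathcomp Require Import ring zify.
Set Implicit Arguments. Unset Strict Implicit. Unset Printing Implicit Defensive.
Import GRing.Theory.
Section Count.
Open Scope nat_scope.
Lemma card_bigcup_leq (I T : finType) (S : I -> {set T}) :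
  #|\bigcup_i S i| <= \sum_i #|S i|.
Proof.
elim/big_rec2: _ => [|i X x _ h]; first by rewrite cards0.
apply: leq_trans (leq_card_setU _ _).1 _; by rewrite leq_add2l.
Qed.

Lemma dcount (T : finType) (A B : {set T}) (R : rel T) (k l : nat) :
  (forall a, a \in A -> #|[set y | R a y]| = k) ->
  (forall y, y \in B -> #|[set a in A | R a y]| <= l) ->
  (forall a y, a \in A -> R a y -> y \in B) ->
  #|A| * k <= #|B| * l.
Proof.
move=> hA hB hAB.
have e1 : #|A| * k = \sum_(a in A) \sum_y (if R a y then 1 else 0).
  rewrite -sum_nat_const; apply: eq_bigr => a aA; rewrite -(hA a aA) -big_mkcond sum1_card.
  by apply: eq_card => y; rewrite inE.
rewrite e1 exchange_big /=.
rewrite (bigID (fun y => y \in B)) /=.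
rewrite [X in _ + X]big1 ?addn0; last first.
  move=> y yB; apply: big1 => a aA; case hR: (R a y) => //.
  by move: (hAB a y aA hR); rewrite (negbTE yB).
rewrite -sum_nat_const; apply: leq_sum => y yB; rewrite -big_mkcondr /= sum1_card.
apply: leq_trans (hB y yB); apply: subset_leq_card; apply/subsetP => a; rewrite !inE.
by [].
Qed.

Lemma arith1 q m d x y : (1 < q)%N -> (3 <= d)%N -> (d <= m - 1)%N -> (x <= q ^ d - 1)%N ->
  (y * q ^ d <= (q^m - q ^ d) * q^2)%N -> (x + y <= (q^(m-1) - 1) + q^2 * (q - 1))%N.
Proof.
move=> q1 d3 dm hx hy.
have [i di] : exists i, d = 3 + i by exists (d - 3); lia.
subst d.
have [j em] : exists j, m = 4 + i + j by exists (m - 4 - i); lia.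
rewrite em in hy *.
have e1 : q ^ (4 + i + j) = q^3 * q^i * (q * q^j).
  rewrite (_ : 4 + i + j = 3 + i + j.+1); last lia.
  by rewrite !expnD [q ^ j.+1]expnS.
have e2 : q ^ (4 + i + j - 1) = q^3 * q^i * q^j.
  rewrite (_ : 4 + i + j - 1 = 3 + i + j); last lia.
  by rewrite !expnD.
have e3 : q ^ (3 + i) = q^3 * q^i by rewrite expnD.
rewrite e1 e3 in hy; rewrite e3 in hx; rewrite e2.
have A1 : 1 <= q^i by rewrite expn_gt0; lia.
have B1 : 1 <= q^j by rewrite expn_gt0; lia.
have Q3 : q^3 = q * q * q by rewrite !expnS expn0; lia.
have Q2 : q^2 = q * q by rewrite !expnS expn0; lia.
rewrite Q2 in hy *; rewrite Q3 in hy hx *.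
move: hx hy A1 B1 q1; set A := q^i; set B := q^j => hx hy A1 B1 q1.
have hy' : y <= (q * B - 1) * (q * q).
  have P : 0 < q * q * q * A by rewrite !muln_gt0; lia.
  rewrite -(leq_pmul2r P).
  apply: leq_trans hy _; apply: eq_leq.
  rewrite ?mulnBl ?mulnBr mul1n; congr (_ - _); ring.
set T := q * q * q in hx hy' *.
have key0 : A + B <= A * B + 1.
  have [A' eA] : exists A', A = A'.+1 by exists A.-1; lia.
  have h : A' <= A' * B by rewrite leq_pmulr.
  rewrite eA mulSn; lia.
have key : T * A + T * B <= T * (A * B) + T.
  by rewrite -mulnDr -[X in _ <= _ + X]muln1 -mulnDr leq_mul2l key0 orbT.
have e4 : (q * B - 1) * (q * q) = T * B - q * q by rewrite mulnBl mul1n /T; congr (_ - _); ring.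
have e5 : q * q * (q - 1) = T - q * q by rewrite mulnBr muln1.
have e6 : T * A * B = T * (A * B) by rewrite mulnA.
rewrite e4 in hy'; rewrite e5 e6.
have h7 : q * q <= T * B by rewrite /T -mulnA leq_pmulr // muln_gt0; lia.
have h8 : q * q <= T by rewrite /T leq_pmulr; lia.
have h9 : 1 <= T * A by rewrite muln_gt0 /T !muln_gt0; lia.
lia.
Qed.

Lemma arith2 q m u x y : (1 < q)%N -> (0 < m)%N -> (1 <= u)%N -> (u <= q^3)%N -> (u <= q^m)%N -> (x <= u - 1)%N ->
  (y * q <= q^m - u)%N -> (x + y <= (q^(m-1) - 1) + q^2 * (q - 1))%N.
Proof.
move=> q1 m0 u1 uq uqm hx hy.
have em : q ^ m = q * q ^ (m - 1).
  by rewrite -expnS (_ : (m - 1).+1 = m) //; lia.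
have Q3 : q^3 = q * q * q by rewrite !expnS expn0; lia.
have Q2 : q^2 = q * q by rewrite !expnS expn0; lia.
rewrite em in hy uqm; rewrite Q3 in uq; rewrite Q2.
have Q1 : 1 <= q ^ (m - 1) by rewrite expn_gt0; lia.
move: hy Q1 uqm; set Q := q ^ (m - 1) => hy Q1 uqm.
have hu : u * (q - 1) <= q * q * q * (q - 1) by rewrite leq_mul2r uq orbT.
have h1 : (x + y) * q <= ((Q - 1) + q * q * (q - 1)) * q.
  have hxq : x * q <= u * q - q by rewrite -[X in _ - X]mul1n -mulnBl leq_mul2r hx orbT.
  have hu' : u * q - u <= q * q * q * q - q * q * q by move: hu; rewrite !mulnBr !muln1.
  have e1 : ((Q - 1) + q * q * (q - 1)) * q = Q * q - q + (q * q * q * q - q * q * q).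
    by rewrite mulnDl !mulnBl !mul1n mulnBr muln1 mulnBl.
  rewrite e1 mulnDl.
  have hQ : q <= Q * q by rewrite leq_pmull.
  have hq4 : q * q * q <= q * q * q * q by rewrite leq_pmulr //; lia.
  have huq : u <= u * q by rewrite leq_pmulr //; lia.
  have hqu : q <= u * q by rewrite leq_pmull.
  lia.
by rewrite leq_pmul2r in h1; lia.
Qed.

Lemma arith3 q : (q + q.+1 * (q ^ 2 - q) <= q ^ 3)%N.
Proof.
case: q => [|k] //.
have -> : (k.+1 ^ 2 - k.+1 = k.+1 * k)%N by rewrite expnS expn1 mulnSr addnK.
rewrite !expnS expn0 muln1.
nia.
Qed.
End Count.

Local Open Scope ring_scope.

Section W.
Variables (F : fieldType) (m : nat).
Implicit Types u v w x p a b c d e f : 'rV[F]_m.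

Lemma wedgeE u v i j : wedge u v i j = u 0 i * v 0 j - v 0 i * u 0 j.
Proof. by rewrite !mxE !big_ord1 !mxE. Qed.

Lemma wedgeDl u v w : wedge (u + v) w = wedge u w + wedge v w.
Proof. by apply/matrixP=> i j; rewrite [RHS]mxE ?wedgeE !mxE; ring. Qed.
Lemma wedgeDr u v w : wedge w (u + v) = wedge w u + wedge w v.
Proof. by apply/matrixP=> i j; rewrite [RHS]mxE ?wedgeE !mxE; ring. Qed.
Lemma wedgeZl (s : F) u v : wedge (s *: u) v = s *: wedge u v.
Proof. by apply/matrixP=> i j; rewrite [RHS]mxE ?wedgeE !mxE; ring. Qed.
Lemma wedgeZr (s : F) u v : wedge u (s *: v) = s *: wedge u v.
Proof. by apply/matrixP=> i j; rewrite [RHS]mxE ?wedgeE !mxE; ring. Qed.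
Lemma wedgeC u v : wedge v u = - wedge u v.
Proof. by apply/matrixP=> i j; rewrite [RHS]mxE ?wedgeE; ring. Qed.
Lemma wedgevv u : wedge u u = 0.
Proof. by apply/matrixP=> i j; rewrite [RHS]mxE ?wedgeE; ring. Qed.
Lemma wedge0r u : wedge u 0 = 0.
Proof. by apply/matrixP=> i j; rewrite [RHS]mxE ?wedgeE !mxE; ring. Qed.

Definition wedgep p x := wedge p x.
Lemma wedgep_lin p : linear (wedgep p).
Proof. by move=> s x y; rewrite /wedgep wedgeDr wedgeZr. Qed.
HB.instance Definition _ p := GRing.isLinear.Build F 'rV[F]_m 'M[F]_m _ (wedgep p) (wedgep_lin p).

Definition star p : {vspace 'M[F]_m} := limg (linfun (wedgep p)).

Lemma starP p (w : 'M[F]_m) : reflect (exists x, w = wedge p x) (w \in star p).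
Proof.
apply: (iffP memv_imgP) => [[x _ ->]|[x ->]]; first by exists x; rewrite lfunE.
by exists x; rewrite ?memvf ?lfunE.
Qed.

Definition J2 : 'M[F]_(1+1) := block_mx 0 1%:M (-1%:M) 0.

Lemma wedge_mx u v : wedge u v = (col_mx u v)^T *m J2 *m col_mx u v.
Proof.
rewrite tr_col_mx /J2 mul_row_block !mulmx0 !mulmxN !mulmx1 !add0r addr0.
rewrite mul_row_col /wedge mulNmx addrC.
by [].
Qed.

Definition J4 : 'M[F]_((1+1)+(1+1)) := block_mx J2 0 0 J2.
Definition N4 a b c d : 'M[F]_((1+1)+(1+1), m) := col_mx (col_mx a b) (col_mx c d).

Lemma wedge2_mx a b c d :
  wedge a b + wedge c d = (N4 a b c d)^T *m J4 *m N4 a b c d.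
Proof.
rewrite /N4 tr_col_mx /J4 mul_row_block !mulmx0 !add0r addr0.
by rewrite mul_row_col -!wedge_mx.
Qed.

Lemma J4_unit : J4 \in unitmx.
Proof.
have h : J4 *m (- J4) = 1%:M.
  rewrite /J4 /J2 mulmxN !mulmx_block !mulmx0 !mul0mx !addr0 !add0r.
  rewrite ?mulmxN ?mulNmx ?mulmx1 ?mul1mx ?opprK.
  rewrite (scalar_mx_block (1+1) (1+1)) (scalar_mx_block 1 1).
  by rewrite !opp_block_mx !oppr0 !opprK.
by case: (mulmx1_unit h).
Qed.

Lemma rank_wedge e f : (\rank (wedge e f) <= 2)%N.
Proof.
rewrite /wedge -mulNmx.
have h1 := mxrank_add (e^T *m f) ((- f^T) *m e).
have h2 := leq_trans (mxrankM_maxl (e^T) f) (rank_leq_col _).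
have h3 := leq_trans (mxrankM_maxl (- f^T) e) (rank_leq_col _).
apply: (leq_trans h1); exact: (leq_add h2 h3).
Qed.

Lemma rank4 a b c d e f : row_free (N4 a b c d) -> wedge a b + wedge c d != wedge e f.
Proof.
move=> fr; apply/eqP=> h.
have := rank_wedge e f; rewrite -h wedge2_mx mxrankMfree // mxrankMfree.
  by rewrite mxrank_tr; move/eqP: fr => ->.
by rewrite row_free_unit J4_unit.
Qed.

Lemma dep4 a b c d : ~~ row_free (N4 a b c d) ->
  exists k0 k1 k2 k3 : F, [|| k0 != 0, k1 != 0, k2 != 0 | k3 != 0] /\
    k0 *: a + k1 *: b + k2 *: c + k3 *: d = 0.
Proof.
rewrite -kermx_eq0 => hK.
set K := kermx _ in hK.
have [i hi] : exists i, row i K != 0.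
  case: (pickP (fun i => row i K != 0)) => [i hi|h]; first by exists i.
  by case/eqP: hK; apply/row_matrixP => i; rewrite row0; move/negbFE: (h i) => /eqP.
have hk : row i K *m N4 a b c d = 0 by rewrite -row_mul mulmx_ker row0.
move: hi hk; set k := row i K.
rewrite -(hsubmxK k) -(hsubmxK (lsubmx k)) -(hsubmxK (rsubmx k)).
set k0 := lsubmx (lsubmx k); set k1 := rsubmx (lsubmx k).
set k2 := lsubmx (rsubmx k); set k3 := rsubmx (rsubmx k).
rewrite /N4 !mul_row_col (mx11_scalar k0) (mx11_scalar k1) (mx11_scalar k2) (mx11_scalar k3).
rewrite !mul_scalar_mx => hn hk.
exists (k0 0 0), (k1 0 0), (k2 0 0), (k3 0 0); split; last by rewrite !addrA in hk.
apply: contraR hn; rewrite !negb_or !negbK => /and4P [/eqP-> /eqP-> /eqP-> /eqP->].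
by rewrite !raddf0 !row_mx0.
Qed.

Lemma solve1 (k y z : F) : k != 0 -> k * y + z = 0 -> y = - z / k.
Proof.
move=> nz h; have -> : z = - (k * y) by apply/eqP; rewrite -addr_eq0 addrC h.
by rewrite opprK mulrC mulKf.
Qed.

Lemma dep2 a b (k0 k1 : F) : k0 *: a + k1 *: b = 0 -> (k0 != 0) || (k1 != 0) -> wedge a b = 0.
Proof.
move=> h /orP [nz|nz].
  have -> : a = (- k1 / k0) *: b.
    apply/rowP => j; move/rowP/(_ j): h; rewrite !mxE => h.
    by rewrite (solve1 nz h); ring.
  by rewrite wedgeZl wedgevv scaler0.
have -> : b = (- k0 / k1) *: a.
  apply/rowP => j; move/rowP/(_ j): h; rewrite !mxE => h.
  by rewrite addrC in h; rewrite (solve1 nz h); ring.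
by rewrite wedgeZr wedgevv scaler0.
Qed.

Lemma span_star p u v (s t : F) : p = s *: u + t *: v -> p != 0 ->
  exists x, wedge u v = wedge p x.
Proof.
move=> -> hp; have [s0|snz] := eqVneq s 0.
  move: hp; rewrite s0 scale0r add0r => hp.
  have tnz : t != 0 by apply: contraNneq hp => ->; rewrite scale0r.
  exists (- t^-1 *: u); rewrite ?scale0r ?add0r wedgeZl wedgeZr [wedge v u]wedgeC.
  rewrite scalerN -scaleNr scalerA.
  have -> : t * - - t^-1 = 1 by rewrite opprK mulfV.
  by rewrite scale1r.
exists (s^-1 *: v).
by rewrite wedgeZr wedgeDl !wedgeZl wedgevv scaler0 addr0 scalerA mulVf // scale1r.
Qed.

Lemma meet a b c d e f : wedge a b + wedge c d = wedge e f ->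
  wedge a b != 0 -> wedge c d != 0 ->
  exists p, p != 0 /\ (exists x, wedge a b = wedge p x) /\ (exists y, wedge c d = wedge p y).
Proof.
move=> h nab ncd.
have nfr : ~~ row_free (N4 a b c d).
  by apply/negP => fr; move: (rank4 e f fr); rewrite h eqxx.
have [k0 [k1 [k2 [k3 [hnz hk]]]]] := dep4 nfr.
have [P0|Pnz] := eqVneq (k2 *: c + k3 *: d) 0.
  have h01 : k0 *: a + k1 *: b = 0.
    have : (k0 *: a + k1 *: b) + (k2 *: c + k3 *: d) = 0 by rewrite !addrA hk.
    by rewrite P0 addr0.
  case/or4P: hnz => nz.
  - by case/eqP: nab; apply: (dep2 h01); rewrite nz.
  - by case/eqP: nab; apply: (dep2 h01); rewrite nz orbT.
  - by case/eqP: ncd; apply: (dep2 P0); rewrite nz.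
  - by case/eqP: ncd; apply: (dep2 P0); rewrite nz orbT.
exists (k2 *: c + k3 *: d); split => //; split; last exact: span_star.
apply: (span_star (s := - k0) (t := - k1)) => //.
have : (k2 *: c + k3 *: d) + (k0 *: a + k1 *: b) = 0 by rewrite addrC !addrA hk.
by move/eqP; rewrite addr_eq0 => /eqP ->; rewrite !scaleNr opprD.
Qed.

Lemma fiber1 a b p x e f : wedge a b + wedge p x = wedge e f -> p != 0 ->
  wedge a b != 0 -> (forall y, wedge a b != wedge p y) ->
  exists s t : F, wedge p x = wedge p (s *: a + t *: b).
Proof.
move=> h pnz nab nstar.
have nfr : ~~ row_free (N4 a b p x).
  by apply/negP => fr; move: (rank4 e f fr); rewrite h eqxx.
have [k0 [k1 [k2 [k3 [hnz hk]]]]] := dep4 nfr.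
have [k30|k3nz] := eqVneq k3 0.
  move: hk hnz; rewrite k30 scale0r addr0 eqxx orbF => hk hnz.
  have [k20|k2nz] := eqVneq k2 0.
    move: hk hnz; rewrite k20 scale0r addr0 eqxx orbF => hk hnz.
    by case/eqP: nab; apply: (dep2 hk hnz).
  have [y hy] : exists y, wedge a b = wedge p y.
    apply: (span_star (s := - k0 / k2) (t := - k1 / k2)) => //.
    apply/rowP => j; move/rowP/(_ j): hk; rewrite !mxE => hk.
    rewrite addrC in hk; rewrite (solve1 k2nz hk); ring.
  by case/eqP: (nstar y).
exists (- k0 / k3), (- k1 / k3).
have -> : x = (- k0 / k3) *: a + (- k1 / k3) *: b + (- k2 / k3) *: p.
  apply/rowP => j; move/rowP/(_ j): hk; rewrite !mxE => hk.
  rewrite addrC in hk; rewrite (solve1 k3nz hk); ring.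
by rewrite wedgeDr wedgeZr wedgevv scaler0 addr0.
Qed.

Lemma p_in_span a b p x : wedge a b = wedge p x -> wedge a b != 0 ->
  exists s t : F, p = s *: a + t *: b.
Proof.
move=> h nz.
have [i [j hij]] : exists i j, wedge p x i j != 0.
  case: (pickP (fun ij : 'I_m * 'I_m => wedge p x ij.1 ij.2 != 0)) => [[i j] hi|hn].
    by exists i, j.
  by case/eqP: nz; rewrite h; apply/matrixP => i j; move/negbFE: (hn (i, j)) => /eqP ->; rewrite mxE.
have hw k l : a 0 k * b 0 l - b 0 k * a 0 l = p 0 k * x 0 l - x 0 k * p 0 l.
  by move/matrixP/(_ k l): h; rewrite !wedgeE.
move: hij; rewrite wedgeE; set dl := _ - _ => dnz.
exists ((p 0 i * b 0 j - p 0 j * b 0 i) / dl), ((p 0 j * a 0 i - p 0 i * a 0 j) / dl).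
apply/rowP => l; rewrite !mxE.
have key : p 0 l * dl = (p 0 i * b 0 j - p 0 j * b 0 i) * a 0 l + (p 0 j * a 0 i - p 0 i * a 0 j) * b 0 l.
  transitivity (- p 0 i * (a 0 j * b 0 l - b 0 j * a 0 l) + p 0 j * (a 0 i * b 0 l - b 0 i * a 0 l)); last by ring.
  rewrite !hw /dl; ring.
apply: (mulIf dnz); rewrite key; field; done.
Qed.
End W.


Lemma dim_star (F : fieldType) (m : nat) (p : 'rV[F]_m) : p != 0 -> (\dim (star p) <= m - 1)%N.
Proof.
move=> pnz; have := limg_ker_dim (linfun (wedgep p)) fullv.
rewrite capfv dimvf /dim /= mul1n -/(star p) => h.
have : (0 < \dim (lker (linfun (wedgep p))))%N.
  rewrite lt0n dimv_eq0; apply/negP => /eqP h0.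
  have : p \in lker (linfun (wedgep p)) by rewrite memv_ker lfunE /= /wedgep wedgevv.
  by rewrite h0 memv0 (negbTE pnz).
move: h; set x := \dim (lker _); set y := \dim (star p) => h h2.
rewrite -h; move: h2; clear; lia.
Qed.

Section Cases.
Variables (F : finFieldType) (m : nat) (W : {vspace 'M[F]_m}).
Hypothesis hdimW : \dim W = m.
Local Notation q := #|F|.
Local Notation D := [set w : 'M[F]_m | (w \in W) && decomposable w].

Lemma q_gt1 : (1 < q)%N.
Proof. exact: finNzRing_gt1. Qed.

Lemma decP (w : 'M[F]_m) : decomposable w -> w != 0 /\ exists u v, w = wedge u v.
Proof.
rewrite /decomposable => /andP [nz h]. move: h => /existsP [u h]. move: h => /existsP [v /eqP e]. by split => //; exists u, v.
Qed.

Lemma case1 (p : 'rV[F]_m) : p != 0 -> (3 <= \dim (W :&: star p))%N ->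
  (#|D| <= (q ^ (m - 1) - 1) + q ^ 2 * (q - 1))%N.
Proof.
move=> pnz d3.
set K := (W :&: star p)%VS.
set d := \dim K.
have dm : (d <= m - 1)%N.
  apply: leq_trans (dim_star pnz); apply: dimvS; exact: capvSr.
set KS := [set w : 'M[F]_m | w \in K].
set WS := [set w : 'M[F]_m | w \in W].
have cardK : #|KS| = (q ^ d)%N by rewrite cardsE card_vspace.
have cardW : #|WS| = (q ^ m)%N by rewrite cardsE card_vspace hdimW.
have KW : KS \subset WS.
  by apply/subsetP => w; rewrite !inE memv_cap => /andP [].
have h1 : (#|D :&: KS| <= q ^ d - 1)%N.
  rewrite -cardK; have -> : (#|KS| - 1 = #|KS :\ (0%R : 'M[F]_m)|)%N.
    by rewrite (cardsD1 (0 : 'M[F]_m) KS) inE mem0v add1n subn1.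
  apply: subset_leq_card; apply/subsetP => w; rewrite !inE.
  by case/andP => /andP [_ /andP [nz _]] ->; rewrite nz.
set A := D :\: KS.
set B := WS :\: KS.
have cardB : #|B| = (q ^ m - q ^ d)%N by rewrite cardsDS // cardW cardK.
have h2 : (#|A| * q ^ d <= #|B| * q ^ 2)%N.
  apply: (dcount (R := fun a y => y - a \in K)).
  - move=> a _; rewrite -cardK.
    have -> : [set y | y - a \in K] = [set z + a | z in KS].
      apply/setP => y; rewrite inE; apply/idP/imsetP => [h|[z zK ->]].
        by exists (y - a); rewrite ?inE // subrK.
      by move: zK; rewrite inE addrK.
    by rewrite card_imset //; apply: addIr.
  - move=> y yB.
    case: (set_0Vmem [set a in A | y - a \in K]) => [->|[a0 a0S]]; first by rewrite cards0.
    move: (a0S); rewrite !inE => /andP [/andP [a0K /andP [a0W da0]] ya0].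
    have [na0 [u0 [v0 ea0]]] := decP da0.
    apply: (@leq_trans #|[set a0 + wedge p (st.1 *: u0 + st.2 *: v0) | st : F * F]|).
      apply: subset_leq_card; apply/subsetP => a; rewrite !inE.
      case/andP => /andP [aK /andP [aW da]] ya.
      have [na [u [v ea]]] := decP da.
      have dK : a - a0 \in K.
        have -> : a - a0 = (y - a0) - (y - a).
          by rewrite opprB [RHS]addrC addrA subrK.
        by rewrite memvB.
      move: (dK); rewrite memv_cap => /andP [_ /starP [x ex]].
      have hs : wedge u0 v0 + wedge p x = wedge u v by rewrite -ea0 -ex -ea addrC subrK.
      have nst : forall z, wedge u0 v0 != wedge p z.
        move=> z; apply/eqP => e; move: a0K; rewrite memv_cap a0W /=.
        by apply/negP; rewrite negbK; apply/starP; exists z; rewrite ea0.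
      have nab0 : wedge u0 v0 != 0 by rewrite -ea0.
      have [s [t est]] := fiber1 hs pnz nab0 nst.
      apply/imsetP; exists (s, t) => //=.
      by rewrite -est -ex ea0 addrC subrK.
    apply: leq_trans (leq_imset_card _ _) _.
    by rewrite ?cardsT card_prod expnS expn1.
  - move=> a y; rewrite !inE => /andP [aK /andP [aW _]] hy.
    have ya : y = (y - a) + a by rewrite subrK.
    have yW : y \in W by rewrite ya memvD //; move: hy; rewrite memv_cap => /andP [].
    rewrite yW andbT; apply: contra aK => yK.
    have -> : a = y - (y - a) by rewrite opprB addrC subrK.
    by rewrite memvB.
have hD : #|D| = (#|D :&: KS| + #|A|)%N by rewrite cardsID.
rewrite hD; apply: (arith1 q_gt1 d3 dm h1).
by rewrite -cardB.
Qed.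

Definition rep (a b : 'rV[F]_m) (o : option F) : 'rV[F]_m :=
  if o is Some t then a + t *: b else b.

Section Case2.
Variables (a b : 'rV[F]_m).
Local Notation r := (rep a b).

Lemma star_r o : wedge a b \in star (r o).
Proof.
apply/starP; case: o => [t|] /=.
  by exists b; rewrite wedgeDl wedgeZl wedgevv scaler0 addr0.
by exists (- a); rewrite -scaleN1r wedgeZr scaleN1r -wedgeC.
Qed.

Lemma star_rep (p x : 'rV[F]_m) (s t : F) : p = s *: a + t *: b ->
  exists o, wedge p x \in star (r o).
Proof.
move=> ->; have [s0|snz] := eqVneq s 0.
  exists None; apply/starP; exists (t *: x) => /=.
  by rewrite s0 scale0r add0r wedgeZl wedgeZr.
exists (Some (t / s)); apply/starP; exists (s *: x) => /=.
by rewrite wedgeZr -wedgeZl scalerDr scalerA mulrCA mulfV // mulr1.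
Qed.
End Case2.

Lemma wedge0l (x : 'rV[F]_m) : wedge 0 x = 0.
Proof. by rewrite wedgeC wedge0r oppr0. Qed.

Lemma case2 : (0 < m)%N -> (forall p : 'rV[F]_m, p != 0 -> (\dim (W :&: star p) <= 2)%N) ->
  (#|D| <= (q ^ (m - 1) - 1) + q ^ 2 * (q - 1))%N.
Proof.
move=> m0 hdim2.
case: (set_0Vmem D) => [->|[w0 w0D]]; first by rewrite cards0.
move: (w0D); rewrite inE => /andP [w0W dw0].
have [nw0 [a1 [b1 ew0]]] := decP dw0.
set r := rep a1 b1.
have hr o : w0 \in star (r o) by rewrite ew0 star_r.
have rnz o : r o != 0.
  apply/negP => /eqP h0; move: (hr o); rewrite h0 => /starP [x ex].
  by move: nw0; rewrite ex wedge0l eqxx.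
set Ko := fun o => [set w : 'M[F]_m | w \in (W :&: star (r o))%VS].
set Fw := [set t *: w0 | t : F].
have cardFw : #|Fw| = q.
  rewrite card_imset // => s t /eqP; rewrite -subr_eq0 -scalerBl scaler_eq0 (negbTE nw0) orbF subr_eq0.
  by move/eqP.
have FwK o : Fw \subset Ko o.
  apply/subsetP => w /imsetP [t _ ->]; rewrite inE memv_cap; apply/andP; split; apply: memvZ => //.
have cardKo o : (#|Ko o| <= q ^ 2)%N.
  rewrite cardsE card_vspace leq_exp2l ?q_gt1 //; exact: hdim2.
set U := [set w : 'M[F]_m | (w \in W) && [exists o, w \in star (r o)]].
have cardU : (#|U| <= q ^ 3)%N.
  have sub : U \subset Fw :|: \bigcup_o (Ko o :\: Fw).
    apply/subsetP => w; rewrite inE => /andP [wW /existsP [o wo]].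
    rewrite inE; case: (boolP (w \in Fw)) => //= wF.
    by apply/bigcupP; exists o => //; rewrite !inE wF /= memv_cap wW wo.
  apply: leq_trans (subset_leq_card sub) _.
  apply: leq_trans (leq_card_setU _ _).1 _.
  apply: leq_trans (leq_add (leqnn _) (card_bigcup_leq _)) _.
  have h o : (#|Ko o :\: Fw| <= q ^ 2 - q)%N by rewrite cardsDS // cardFw leq_sub2r.
  apply: (@leq_trans (#|Fw| + \sum_(o : option F) (q ^ 2 - q))%N).
    by rewrite leq_add2l; apply: leq_sum => o _; exact: h o.
  rewrite sum_nat_const card_option cardFw.
  exact: arith3.
set WS := [set w : 'M[F]_m | w \in W].
have cardW : #|WS| = (q ^ m)%N by rewrite cardsE card_vspace hdimW.
have UW : U \subset WS by apply/subsetP => w; rewrite !inE => /andP [].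
have U0 : (0 : 'M[F]_m) \in U.
  by rewrite inE mem0v /=; apply/existsP; exists None; exact: mem0v.
have h1 : (#|D :&: U| <= #|U| - 1)%N.
  have -> : (#|U| - 1 = #|U :\ (0%R : 'M[F]_m)|)%N.
    by rewrite (cardsD1 (0 : 'M[F]_m) U) U0 add1n subn1.
  apply: subset_leq_card; apply/subsetP => w; rewrite !inE.
  by case/andP => /andP [_ /andP [nz _]] ->; rewrite nz.
set A := D :\: U.
set B := WS :\: U.
have cardB : #|B| = (q ^ m - #|U|)%N by rewrite cardsDS // cardW.
have h2 : (#|A| * q <= #|B| * 1)%N.
  apply: (dcount (R := fun a y => [exists t : F, y == a + t *: w0])).
  - move=> a _.
    have -> : [set y | [exists t : F, y == a + t *: w0]] = [set a + t *: w0 | t : F].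
      apply/setP => y; rewrite inE; apply/existsP/imsetP => [[t /eqP ->]|[t _ ->]]; by exists t.
    rewrite card_imset // => s t /addrI /eqP.
    rewrite -subr_eq0 -scalerBl scaler_eq0 (negbTE nw0) orbF subr_eq0.
    by move/eqP.
  - move=> y yB.
    case: (set_0Vmem [set a in A | [exists t : F, y == a + t *: w0]]) => [->|[a0 a0S]].
      by rewrite cards0.
    apply: (@leq_trans #|[set a0]|); last by rewrite cards1.
    apply: subset_leq_card; apply/subsetP => a; rewrite !inE.
    move: (a0S); rewrite !inE => /andP [/andP [a0U /andP [a0W da0]] /existsP [t0 /eqP y0]].
    case/andP => /andP [aU /andP [aW da]] /existsP [t /eqP ya].
    apply/eqP; apply: contraNeq a0U => ne.
    have [na0 [c [d ea0]]] := decP da0.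
    have [na [c' [d' ea]]] := decP da.
    set s := t0 - t.
    have eaa : a = a0 + s *: w0.
      by rewrite /s scalerBl addrA -y0 ya addrK.
    have snz : s != 0 by apply: contraNneq ne => s0; rewrite eaa s0 scale0r addr0.
    have hs : wedge c d + wedge (s *: a1) b1 = wedge c' d'.
      by rewrite -ea0 wedgeZl -ew0 -ea eaa.
    have n1 : wedge c d != 0 by rewrite -ea0.
    have n2 : wedge (s *: a1) b1 != 0 by rewrite wedgeZl -ew0 scaler_eq0 negb_or snz.
    have [p [pnz [[x ex] [y' ey']]]] := meet hs n1 n2.
    have ew1 : wedge a1 b1 = wedge p (s^-1 *: y').
      by rewrite wedgeZr -ey' wedgeZl scalerA mulVf // scale1r.
    have nw1 : wedge a1 b1 != 0 by rewrite -ew0.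
    have [sg [tg ep]] := p_in_span ew1 nw1.
    have [o ho] := star_rep x ep.
    rewrite a0W /=; apply/existsP; exists o.
    by rewrite ea0 ex.
  - move=> a y; rewrite !inE => /andP [aU /andP [aW _]] /existsP [t /eqP ya].
    have yW : y \in W by rewrite ya memvD // memvZ.
    rewrite yW andbT /=; apply: contra aU => /existsP [o yo].
    rewrite aW /=; apply/existsP; exists o.
    have -> : a = y - t *: w0 by rewrite ya addrK.
    by rewrite memvB // memvZ.
have hD : #|D| = (#|D :&: U| + #|A|)%N by rewrite cardsID.
rewrite hD; apply: (arith2 q_gt1 m0 _ cardU _ h1).
- by rewrite card_gt0; apply/set0Pn; exists 0.
- by rewrite -cardW; apply: subset_leq_card.
- by rewrite -cardB -[X in (_ <= X)%N]muln1.
Qed.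
End Cases.

Theorem lemma6p6 (F : finFieldType) (m : nat) (hm : (4 < m)%N)
  (W : {vspace 'M[F]_m})
  (hW : forall w, w \in W -> alternating w)
  (hdim : \dim W = (m - 1).+1) :
  (#|[set w : 'M[F]_m | (w \in W) && decomposable w]|
     <= (#|F| ^ (m - 1) - 1) + #|F| ^ 2 * (#|F| - 1))%N.
Proof.
have m0 : (0 < m)%N by apply: leq_trans hm.
have hd : \dim W = m by rewrite hdim subn1 prednK.
case: (boolP [exists p : 'rV[F]_m, (p != 0) && (3 <= \dim (W :&: star p))%N]).
  by move=> /existsP [p /andP [pnz d3]]; exact: (case1 hd pnz d3).
rewrite negb_exists => /forallP h; apply: case2 hd m0 _ => p pnz.
by move: (h p); rewrite pnz /= -ltnNge ltnS.
Qed.
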